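(* Let $n=1$ and let $\mathbb{T}$ be a radical tower over $\mathbb{C}(t)$ such that its tower variety $\mathcal{V}_\mathbb{T}$ is a rational curve. Then for any radical parametrization $\mathcal{P}$ whose entries lie in the last field of $\mathbb{T}$, the radical variety $\mathcal{V}_\mathcal{P}$ is a rational curve.
   Context: A radical tower $\mathbb{T}$ over $\mathbb{C}(t)$ is a tower of fields $\mathbb{F}_0=\mathbb{C}(t)\subseteq\dots\subseteq\mathbb{F}_m$ with $\mathbb{F}_i=\mathbb{F}_{i-1}(\delta_i)$, $\delta_i^{e_i}=\alpha_i\in\mathbb{F}_{i-1}$, $e_i\in\mathbb{N}$, where the $\delta_i$ are realized as analytic functions $\delta_i(t)$ by fixing branch values at some point. A radical parametrization is a tuple $\overline{x}=(x_1,\dots,x_r)$, $r>1$, of elements of $\mathbb{F}_m$ whose derivative with respect to $t$ (derivation extended to $\mathbb{F}_m$) is nonzero (Jacobian of rank $1$). The tower variety is $\mathcal{V}_\mathbb{T}=\overline{\{(t,\delta_1(t),\dots,\delta_m(t))\}}\subset\mathbb{C}^{1+m}$ (Zariski closure of the image of $t\mapsto(t,\overline{\delta}(t))$). The radical variety $\mathcal{V}_\mathcal{P}\subset\mathbb{C}^r$ is the Zariski closure of the image $\{\overline{x}(t)\}$. *)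

(* Defs.v *)
From HB Require Import structures.
From mathcomp Require Import all_boot all_order all_algebra.
From mathcomp Require Import all_classical all_reals all_analysis.
From mathcomp Require Import complex.
From mathcomp Require mpoly.
Set Implicit Arguments. Unset Strict Implicit. Unset Printing Implicit Defensive.
Import Order.TTheory GRing.Theory Num.Theory.
Import numFieldNormedType.Exports.
Local Open Scope classical_set_scope.
Local Open Scope ring_scope.

Section RadicalDefs.
Variable R : realType.
Local Notation C := R[i].

Definition cpoly (k : nat) := mpoly.mpoly k C.
Definition peval (k : nat) (p : cpoly k) (v : 'I_k -> C) : C := mpoly.meval v p.

Definition zariski_closure (k : nat) (S : set ('I_k -> C)) : set ('I_k -> C) :=
  [set x | forall p : cpoly k, (forall y, S y -> peval p y = 0) -> peval p x = 0].

(* C^o is C with its metric topology given by the complex modulus; the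
   complex derivative of f : C -> C at t is 'D_1 (f : C^o -> C^o) t, and
   f is holomorphic at t iff derivable (f : C^o -> C^o) t 1. *)

(* A subset V of C^k is a rational curve: it is the Zariski closure of the image
   of a non-constant rational parametrization s |-> (P_j(s)/Q_j(s))_j,
   P_j, Q_j in C[s], Q_j <> 0. *)
Definition rational_curve (k : nat) (V : set ('I_k -> C)) : Prop :=
  exists (P Q : 'I_k -> {poly C}),
    (forall j, Q j != 0) /\
    (exists j, forall c : C, P j != c *: Q j) /\
    V = zariski_closure
          [set x | exists s : C, (forall j, (Q j).[s] != 0) /\
                                 x = (fun j => (P j).[s] / (Q j).[s])].

Variable m : nat.
Variable delta : 'I_m -> C -> C.

Definition tower_pt (t : C) : 'I_m.+1 -> C :=
  fun k => if unlift ord0 k is Some i then delta i t else t.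

(* the point (t, delta_1(t), ..., delta_i(t)) of C^(1+i), for i < m
   (zero-based: delta j with j < i) *)
Definition tower_pt_lt (i : 'I_m) (t : C) : 'I_i.+1 -> C :=
  fun k => if unlift ord0 k is Some j then delta (widen_ord (ltnW (ltn_ord i)) j) t
           else t.

(* Analytic realization of a radical tower
     F_0 = C(t), F_(i+1) = F_i(delta_i), delta_i ^ e_i = alpha_i in F_i,
   alpha_i = A_i(t, delta_0, ..., delta_(i-1)) / B_i(t, delta_0, ..., delta_(i-1)):
   the delta_i are holomorphic functions on a nonempty connected open set U
   (the branches are fixed), the denominators B_i are nonzero elements of F_i
   (not identically zero on U) and the radical relations hold on U. *)
Definition radical_tower (e : 'I_m -> nat) (U : set C)
    (A B : forall i : 'I_m, cpoly i.+1) : Prop :=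
  [/\ open (U : set C^o) /\ connected (U : set C^o) /\ U !=set0,
      (forall i t, U t -> derivable (delta i : C^o -> C^o) t 1),
      (forall i, 0 < e i)%N,
      (forall i, exists2 t, U t & peval (B i) (@tower_pt_lt i t) != 0) &
      (forall i t, U t ->
         delta i t ^+ e i * peval (B i) (@tower_pt_lt i t) = peval (A i) (@tower_pt_lt i t))].

Definition tower_variety (U : set C) : set ('I_m.+1 -> C) :=
  zariski_closure [set x | exists2 t, U t & x = tower_pt t].

Variable U : set C.
Variable r : nat.
Variables N D : 'I_r -> cpoly m.+1.

Definition rp_fun (j : 'I_r) (t : C) : C :=
  peval (N j) (tower_pt t) / peval (D j) (tower_pt t).

(* (x_1, ..., x_r), x_j = N_j/D_j in F_m with D_j <> 0 in F_m, is a radical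
   parametrization: r > 1 and its derivative (w.r.t. t) is nonzero, i.e. some
   x_j has derivative not identically zero. *)
Definition radical_parametrization : Prop :=
  [/\ (1 < r)%N,
      (forall j, exists2 t, U t & peval (D j) (tower_pt t) != 0) &
      exists j t, [/\ U t, peval (D j) (tower_pt t) != 0 & 'D_1 (rp_fun j : C^o -> C^o) t != 0]].

Definition radical_variety : set ('I_r -> C) :=
  zariski_closure [set x | exists t, [/\ U t, (forall j, peval (D j) (tower_pt t) != 0)
                                      & x = (fun j => rp_fun j t)]].

End RadicalDefs.

(* Main.v *)
Set Warnings "-all".
Require Import Defs.
From HB Require Import structures.
From mathcomp Require Import all_boot all_order all_algebra.
From mathcomp Require all_classical all_reals all_analysis.
From mathcomp Require Import complex.
From mathcomp Require mpoly.
From mathcomp Require Import ring lra zify.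
Set Warnings "-all".

Module Alg.
Import mpoly.
Import GRing.Theory.
Local Open Scope ring_scope.
Section MP.
Variable C : comNzRingType.
Definition mpol k (f : ('I_k -> C) -> C) :=
  exists G : mpoly.mpoly k C, forall y, f y = mpoly.meval y G.
Lemma mpolE k f g : (forall x, f x = g x) -> mpol k f -> mpol k g.
Proof. by move=> e [p hp]; exists p => s; rewrite -e. Qed.
Lemma mpolD k f g : mpol k f -> mpol k g -> mpol k (fun x => f x + g x).
Proof. by move=> [p hp] [q hq]; exists (p + q) => s; rewrite mevalD hp hq. Qed.
Lemma mpolM k f g : mpol k f -> mpol k g -> mpol k (fun x => f x * g x).
Proof. by move=> [p hp] [q hq]; exists (p * q) => s; rewrite mevalM hp hq. Qed.
Lemma mpolC k c : mpol k (fun _ => c).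
Proof. by exists (mpolyC k c) => s; rewrite mevalC. Qed.
Lemma mpolP k (G : mpoly.mpoly k C) : mpol k (fun y => mpoly.meval y G).
Proof. by exists G. Qed.
Lemma mpolX k (i : 'I_k) : mpol k (fun y => y i).
Proof. by exists (mpolyX C (mnm1 i)) => s; rewrite mevalXU. Qed.
Lemma mevalXsubC k (i : 'I_k) (c : C) : exists G : mpoly.mpoly k C,
  forall y, mpoly.meval y G = y i - c.
Proof. by exists (mpolyX C (mnm1 i) - mpolyC k c) => y; rewrite mevalB mevalXU mevalC. Qed.
End MP.
End Alg.

From mathcomp Require Import all_classical all_reals all_analysis.
Import Order.TTheory GRing.Theory Num.Theory.
Import numFieldNormedType.Exports.
Local Open Scope classical_set_scope.
Local Open Scope ring_scope.
Section Clos.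
Variable R : realType.
Local Notation C := R[i].
Variable X : Type.
Variable Cl : (X -> C) -> Prop.
Hypothesis ClE : forall f g, (forall x, f x = g x) -> Cl f -> Cl g.
Hypothesis ClD : forall f g, Cl f -> Cl g -> Cl (fun x => f x + g x).
Hypothesis ClM : forall f g, Cl f -> Cl g -> Cl (fun x => f x * g x).
Hypothesis ClC : forall c, Cl (fun _ => c).

Lemma Cl_sum (I : Type) (s : seq I) (F : I -> X -> C) :
  (forall i, Cl (F i)) -> Cl (fun x => \sum_(i <- s) F i x).
Proof.
move=> h; elim: s => [|a s IH].
  by eapply ClE; last exact: (ClC 0); move=> x; rewrite big_nil.
by eapply ClE; last exact: (ClD _ _ (h a) IH); move=> x; rewrite big_cons.
Qed.

Lemma Cl_prod (I : Type) (s : seq I) (F : I -> X -> C) :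
  (forall i, Cl (F i)) -> Cl (fun x => \prod_(i <- s) F i x).
Proof.
move=> h; elim: s => [|a s IH].
  by eapply ClE; last exact: (ClC 1); move=> x; rewrite big_nil.
by eapply ClE; last exact: (ClM _ _ (h a) IH); move=> x; rewrite big_cons.
Qed.

Lemma Cl_exp f n : Cl f -> Cl (fun x => f x ^+ n).
Proof.
move=> h; elim: n => [|n IH].
  by eapply ClE; last exact: (ClC 1); move=> x; rewrite expr0.
by eapply ClE; last exact: (ClM _ _ h IH); move=> x; rewrite exprS.
Qed.

Lemma Cl_meval k (F : mpoly.mpoly k C) (f : 'I_k -> X -> C) :
  (forall i, Cl (f i)) -> Cl (fun x => mpoly.meval (fun i => f i x) F).
Proof.
move=> h; apply: ClE; first by move=> x; rewrite mpoly.mevalE.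
apply: Cl_sum => mm; apply: ClM; first exact: ClC.
by apply: Cl_prod => i; apply: Cl_exp.
Qed.

Lemma Cl_horner (p : {poly C}) f : Cl f -> Cl (fun x => p.[f x]).
Proof.
move=> h; apply: ClE; first by move=> x; rewrite horner_coef.
apply: Cl_sum => i; apply: ClM; first exact: ClC.
exact: Cl_exp.
Qed.

Lemma eval2E (H : {poly {poly C}}) (y z : C) :
  H.[z%:P].[y] = \sum_(j < size H) (H`_j).[y] * z ^+ j.
Proof.
rewrite (horner_coef H) horner_sum; apply: eq_bigr => j _.
by rewrite hornerM -rmorphXn /= hornerC.
Qed.

Lemma Cl_eval2 (H : {poly {poly C}}) f g :
  Cl f -> Cl g -> Cl (fun x => H.[(g x)%:P].[f x]).
Proof.
move=> hf hg; apply: ClE; first by move=> x; rewrite eval2E.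
apply: Cl_sum => j; apply: ClM; first exact: Cl_horner.
exact: Cl_exp.
Qed.
End Clos.

Section Ratc.
Variable R : realType.
Local Notation C := R[i].
Variable X : Type.
Variable Pol : (X -> C) -> Prop.
Hypothesis PolE : forall f g, (forall x, f x = g x) -> Pol f -> Pol g.
Hypothesis PolD : forall f g, Pol f -> Pol g -> Pol (fun x => f x + g x).
Hypothesis PolM : forall f g, Pol f -> Pol g -> Pol (fun x => f x * g x).
Hypothesis PolC : forall c, Pol (fun _ => c).
Variable l : X -> C.
Hypothesis Poll : Pol l.

Definition ratc (f : X -> C) :=
  exists g d, Pol g /\ forall x, l x != 0 -> f x * l x ^+ d = g x.

Lemma ratcE f g : (forall x, f x = g x) -> ratc f -> ratc g.
Proof.
by move=> e [h [d [Ph Hh]]]; exists h, d; split => // x /Hh <-; rewrite e.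
Qed.

Lemma ratcD f g : ratc f -> ratc g -> ratc (fun x => f x + g x).
Proof.
move=> [h [d [Ph Hh]]] [h' [d' [Ph' Hh']]].
exists (fun x => h x * l x ^+ d' + h' x * l x ^+ d), (d + d')%N; split.
  by apply: PolD; apply: PolM => //; apply: (@Cl_exp R X Pol PolE PolM PolC).
move=> x lx; rewrite -(Hh x lx) -(Hh' x lx) exprD; ring.
Qed.

Lemma ratcM f g : ratc f -> ratc g -> ratc (fun x => f x * g x).
Proof.
move=> [h [d [Ph Hh]]] [h' [d' [Ph' Hh']]].
exists (fun x => h x * h' x), (d + d')%N; split; first exact: PolM.
move=> x lx; rewrite -(Hh x lx) -(Hh' x lx) exprD; ring.
Qed.

Lemma ratc_pol f : Pol f -> ratc f.
Proof. by move=> Pf; exists f, 0%N; split => // x _; rewrite expr0 mulr1. Qed.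

Lemma ratcC c : ratc (fun _ => c).
Proof. exact/ratc_pol. Qed.

Lemma ratc_div (nu de rho : X -> C) : Pol nu -> Pol rho ->
  (forall x, l x = de x * rho x) -> ratc (fun x => nu x / de x).
Proof.
move=> Pn Pr e; exists (fun x => nu x * rho x), 1%N; split; first exact: PolM.
move=> x; rewrite e expr1 mulf_eq0 negb_or => /andP[dx _].
by rewrite mulrA divfK.
Qed.
End Ratc.
Section Inst.
Variable R : realType.
Local Notation C := R[i].

Lemma poly_all_root (p : {poly C}) : (forall x, p.[x] = 0) -> p = 0.
Proof.
move=> h; apply/eqP; apply/negPn/negP => p0.
have inj : injective (fun i : nat => i%:R : C).
  by move=> i j /eqP; rewrite eqr_nat => /eqP.
suff: (size [seq i%:R : C | i <- iota 0 (size p)] < size p)%N.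
  by rewrite size_map size_iota ltnn.
apply: max_poly_roots p0 _ _.
  by apply/allP => x _; apply/rootP.
by rewrite map_inj_uniq // iota_uniq.
Qed.

Lemma poly_nonroot (p : {poly C}) : p != 0 -> exists x, p.[x] != 0.
Proof.
move=> p0; apply/not_existsP => h; move/eqP: p0; apply; apply: poly_all_root.
by move=> x; apply/eqP; apply/negPn/negP => /(h x).
Qed.

Definition upol (f : C -> C) := exists p : {poly C}, forall s, f s = p.[s].
Lemma upolE f g : (forall x, f x = g x) -> upol f -> upol g.
Proof. by move=> e [p hp]; exists p => s; rewrite -e. Qed.
Lemma upolD f g : upol f -> upol g -> upol (fun x => f x + g x).
Proof. by move=> [p hp] [q hq]; exists (p + q) => s; rewrite hornerD hp hq. Qed.
Lemma upolM f g : upol f -> upol g -> upol (fun x => f x * g x).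
Proof. by move=> [p hp] [q hq]; exists (p * q) => s; rewrite hornerM hp hq. Qed.
Lemma upolC c : upol (fun _ => c).
Proof. by exists c%:P => s; rewrite hornerC. Qed.
Lemma upolH p : upol (horner p).
Proof. by exists p. Qed.

Variable L : {poly C}.
Definition uratc := @ratc R C upol (horner L).
Lemma uratcE f g : (forall x, f x = g x) -> uratc f -> uratc g.
Proof. exact: ratcE. Qed.
Lemma uratcD f g : uratc f -> uratc g -> uratc (fun x => f x + g x).
Proof. exact: (@ratcD R C upol upolE upolD upolM upolC (horner L) (upolH L)). Qed.
Lemma uratcM f g : uratc f -> uratc g -> uratc (fun x => f x * g x).
Proof. exact: (@ratcM R C upol upolM (horner L)). Qed.
Lemma uratcC c : uratc (fun _ => c).
Proof. exact: (@ratcC R C upol upolC (horner L)). Qed.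

Lemma uratc_zero (M : {poly C}) f : L != 0 -> M != 0 -> uratc f ->
  (forall s, L.[s] != 0 -> M.[s] != 0 -> f s = 0) ->
  forall s, L.[s] != 0 -> f s = 0.
Proof.
move=> L0 M0 [g [d [[p Hp] Hf]]] h.
have pML : p * M * L = 0.
  apply: poly_all_root => x; rewrite !hornerM.
  have [->|Lx] := eqVneq L.[x] 0; first by rewrite mulr0.
  have [->|Mx] := eqVneq M.[x] 0; first by rewrite mulr0 mul0r.
  by rewrite -Hp -Hf // h // mul0r !mul0r.
have p0 : p = 0.
  by move/eqP: pML; rewrite !mulf_eq0 (negPf M0) (negPf L0) !orbF => /eqP.
move=> s Ls; have := Hf s Ls; rewrite Hp p0 horner0 => /eqP.
by rewrite mulf_eq0 expf_eq0 (negPf Ls) andbF orbF => /eqP.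
Qed.
End Inst.
Section Elim.
Variable R : realType.
Local Notation C := R[i].

Lemma size_mul_le (p q : {poly C}) a b :
  (size p <= a.+1)%N -> (size q <= b.+1)%N -> (size (p * q)%R <= (a + b).+1)%N.
Proof.
move=> hp hq; apply: leq_trans (size_polyMleq p q) _.
lia.
Qed.

Lemma size_exp_le (p : {poly C}) a k :
  (size p <= a.+1)%N -> (size (p ^+ k)%R <= (a * k).+1)%N.
Proof.
move=> hp; apply: leq_trans (size_poly_exp_leq p k) _.
rewrite ltnS leq_mul2r; apply/orP; right; lia.
Qed.

Lemma elim2 (al be la : {poly C}) : la != 0 ->
  exists H : {poly {poly C}}, H != 0 /\
    forall s, la.[s] != 0 -> H.[(be.[s] / la.[s])%:P].[al.[s] / la.[s]] = 0.
Proof.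
move=> la0.
pose D := (size al + size be + size la)%N.
have D1 : (1 <= D)%N by rewrite /D; have := size_poly_gt0 la; rewrite la0; lia.
pose n := (2 * D).+1.
pose K := (4 * D)%N.
pose M := (D * K).+1.
pose w (i j : nat) := al ^+ i * be ^+ j * la ^+ (K - i - j).
have sw : forall i j, (i < n)%N -> (j < n)%N -> (size (w i j) <= M)%N.
  move=> i j hi hj.
  have e : (D * K = D * i + D * j + D * (K - i - j))%N.
    by rewrite -!mulnDr; congr (_ * _)%N; rewrite /n in hi hj; rewrite /K; lia.
  rewrite /M e; apply: size_mul_le; first apply: size_mul_le.
  - by apply: size_exp_le; rewrite /D; lia.
  - by apply: size_exp_le; rewrite /D; lia.
  - by apply: size_exp_le; rewrite /D; lia.
have n0 : (0 < n)%N by [].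
pose I (idx : 'I_(n * n)) := (idx %/ n)%N.
pose J (idx : 'I_(n * n)) := (idx %% n)%N.
have hI : forall idx, (I idx < n)%N.
  by move=> idx; rewrite /I ltn_divLR // ltn_ord.
have hJ : forall idx, (J idx < n)%N by move=> idx; rewrite /J ltn_mod.
pose A : 'M[C]_(n * n, M) := \matrix_(idx, k) (w (I idx) (J idx))`_k.
have nf : ~~ row_free A.
  rewrite /row_free; apply/negP => /eqP e.
  have := rank_leq_col A; rewrite e /M /n /K.
  have : (1 <= D)%N by [].
  nia.
have [i0 ri0] : exists i0, row i0 (kermx A) != 0.
  apply/not_existsP => h; move: nf; rewrite -kermx_eq0 => /negP; apply.
  apply/eqP/row_matrixP => i; rewrite row0.
  by apply/eqP; apply/negPn/negP => /(h i).
set v := row i0 (kermx A) in ri0.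
have vA : v *m A = 0 by rewrite /v -row_mul mulmx_ker row0.
have [idx0 vidx0] := rV0Pn _ ri0.
have W0 : \sum_idx v 0 idx *: w (I idx) (J idx) = 0.
  apply/polyP => k; rewrite coef_sum coef0.
  have [kM|kM] := ltnP k M.
    have := congr1 (fun B : 'M[C]_(1, M) => B 0 (Ordinal kM)) vA.
    rewrite !mxE => e; apply: (etrans _ e); apply: eq_bigr => idx _.
    by rewrite coefZ /A !mxE.
  by apply: big1 => idx _; rewrite coefZ nth_default ?mulr0 //; apply: leq_trans (sw _ _ (hI idx) (hJ idx)) kM.
pose H : {poly {poly C}} := \sum_idx (v 0 idx *: 'X^(I idx))%:P * 'X^(J idx).
exists H; split.
  apply/negP => /eqP H0.
  have := congr1 (fun h : {poly {poly C}} => (h`_(J idx0))`_(I idx0)) H0.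
  rewrite /= coef0 coef0 /H coef_sum coef_sum (bigD1 idx0) //= big1.
    rewrite mul_polyC coefZ coefXn eqxx mulr1 coefZ coefXn eqxx mulr1 addr0.
    by move/eqP; rewrite (negPf vidx0).
  move=> idx ne; rewrite mul_polyC coefZ coefXn.
  have [eJ|nJ] := eqVneq (J idx0) (J idx); last by rewrite mulr0 coef0.
  rewrite mulr1 coefZ coefXn.
  have [eI|nI] := eqVneq (I idx0) (I idx); last by rewrite mulr0.
  exfalso; move/eqP: ne; apply; apply: val_inj => /=.
  by rewrite (divn_eq idx n) (divn_eq idx0 n) -/(I idx) -/(J idx) -/(I idx0) -/(J idx0) eI eJ.
move=> s ls.
have lK : la.[s] ^+ K != 0 by rewrite expf_neq0.
apply/eqP; rewrite -(mulIr_eq0 _ (mulIf lK)); apply/eqP.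
have := congr1 (fun p => p.[s]) W0; rewrite horner_sum hornerC => <-.
rewrite /H horner_sum horner_sum mulr_suml; apply: eq_bigr => idx _.
rewrite hornerM hornerC hornerXn -rmorphXn /= hornerM hornerC hornerZ hornerXn.
rewrite hornerZ /w !hornerM !horner_exp.
have eK : K = (I idx + J idx + (K - I idx - J idx))%N.
  by have := hI idx; have := hJ idx; rewrite /n /K; lia.
rewrite [in LHS]eK !exprD !expr_div_n.
field.
by rewrite !expf_neq0.
Qed.
End Elim.

Section Peel.
Variable R : realType.
Local Notation C := R[i].
Lemma peel (H : {poly {poly C}}) : H != 0 ->
  exists H1 k, H = H1 * 'X^k /\ H1`_0 != 0.
Proof.
move=> H0; case: (multiplicity_XsubC H 0) => k [q hq eq].
rewrite H0 /= in hq.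
exists q, k; split; first by rewrite eq polyC0 subr0.
by move: hq; rewrite /root horner_coef0.
Qed.
End Peel.
Section Near.
Variable R : realType.
Local Notation C := R[i].

Lemma ball_near (P : C -> Prop) (e : C) : 0 < e ->
  (forall h, h != 0 -> `|h| < e -> P h) -> \forall h \near (0 : C^o)^', P h.
Proof.
move=> e0 hP.
change (within (fun y : C^o => y != 0) (nbhs (0:C^o)) P).
rewrite /within /=.
apply: (@filterS _ _ _ (ball (0 : C^o) e)); last exact: nbhsx_ballx.
by move=> h; rewrite -ball_normE /= sub0r normrN => hr h0; apply: hP.
Qed.

Lemma nonroot_ball (q : {poly C}) (t0 : C) : q != 0 ->
  exists e : C, 0 < e /\ forall h, h != 0 -> `|h| < e -> q.[h + t0] != 0.
Proof.
have [n] : exists n, (size q <= n)%N by exists (size q).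
elim: n q => [|n IH] q.
  by rewrite size_poly_leq0 => /eqP ->; rewrite eqxx.
move=> sq q0.
have [[r [r0 rq]]|] := pselect (exists r, r != 0 /\ root q (r + t0)).
  have [q' eq'] := factor_theorem _ _ rq.
  have q'0 : q' != 0 by apply: contraNneq q0 => e; rewrite eq' e mul0r.
  have sq' : (size q' <= n)%N.
    by move: sq; rewrite eq' size_Mmonic ?monicXsubC // size_XsubC addn2.
  have [e1 [e10 he1]] := IH q' sq' q'0.
  have e20 : 0 < `|r| by rewrite normr_gt0.
  have key : forall e, 0 < e -> e <= e1 -> e <= `|r| ->
      exists e : C, 0 < e /\ forall h, h != 0 -> `|h| < e -> q.[h + t0] != 0.
    move=> e e0 ee1 ee2; exists e; split => // h h0 he.
    rewrite eq' hornerM hornerXsubC mulf_neq0 //.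
      by apply: he1 => //; apply: lt_le_trans he ee1.
    rewrite subr_eq0; apply/negP => /eqP /addIr hr.
    by move: (lt_le_trans he ee2); rewrite hr ltxx.
  have [ab|ba] := orP (real_leVge (gtr0_real e10) (gtr0_real e20)).
    exact: (key e1).
  exact: (key `|r|).
move=> nr; exists 1; split => // h h0 _.
by apply/negP => rh; apply: nr; exists h; split.
Qed.
End Near.
Section Deriv.
Variable R : realType.
Local Notation C := R[i].

Lemma deriv_zero (x : C -> C) (t0 c : C) :
  (\forall h \near (0 : C^o)^', x (h + t0) = c) -> 'D_1 (x : C^o -> C^o) t0 = 0.
Proof.
move=> hx.
rewrite /derive.
set g := (fun h : C^o => _).
have eg : \forall h \near (0 : C^o)^', g h = h^-1 * (c - x t0).
  apply: filterS hx => h hh.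
  by rewrite /g /= /shift /= -hh -[h%:A]/(h * 1) mulr1.
have [ec|nc] := eqVneq c (x t0).
  apply: cvg_lim; first exact: norm_hausdorff.
  apply: cvg_near_cst; apply: filterS eg => h ->.
  by rewrite ec subrr mulr0.
rewrite /lim /lim_in xgetPN //.
move=> l gl.
have hid : (fun h : C^o => h) @ (0 : C^o)^' --> (0 : C^o).
  exact: cvg_within.
have hl := @cvgM C C^o _ _ (fun h : C => h) (g : C -> C) 0 l hid gl.
have {}hl := hl ltac:(typeclasses eauto).
have eg2 : nbhs (0:C^o) (fun h : C^o => h != 0 -> h * g h = c - x t0).
  have eg' : nbhs (0:C^o) (fun h : C^o => h != 0 -> g h = h^-1 * (c - x t0)) := eg.
  by apply: filterS eg' => h hg h0; rewrite (hg h0) mulrA (mulfV h0) mul1r.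
have hc : (fun h => h * g h) @ (0 : C^o)^' --> ((c - x t0) : C^o).
  by apply: cvg_near_cst; exact: eg2.
have e1 := cvg_lim (@norm_hausdorff C C^o) hl.
have e2 := cvg_lim (@norm_hausdorff C C^o) hc.
move: nc; rewrite -subr_eq0.
have -> : c - x t0 = 0 * l by rewrite -e1 -e2.
by rewrite mul0r eqxx.
Qed.
End Deriv.
Section Main.
Variable R : realType.
Local Notation C := R[i].
Variables (m : nat) (delta : 'I_m -> C -> C) (U : set C).
Variables (P Q : 'I_m.+1 -> {poly C}).
Hypothesis HQ : forall j, Q j != 0.
Hypothesis HV : tower_variety delta U = zariski_closure
  [set x | exists s : C, (forall j, (Q j).[s] != 0) /\ x = (fun j => (P j).[s] / (Q j).[s])].

Local Notation tau := (tower_pt delta).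
Definition Lp := \prod_j Q j.
Definition phi (s : C) : 'I_m.+1 -> C := fun j => (P j).[s] / (Q j).[s].

Lemma Lp0 : Lp != 0.
Proof. by apply/prodf_neq0 => j _; exact: HQ. Qed.

Lemma LpQ s : Lp.[s] != 0 -> forall j, (Q j).[s] != 0.
Proof. by rewrite /Lp horner_prod => /prodf_neq0 h j; apply: h. Qed.

Lemma QLp s : (forall j, (Q j).[s] != 0) -> Lp.[s] != 0.
Proof. by move=> h; rewrite /Lp horner_prod; apply/prodf_neq0 => j _; exact: h. Qed.

Lemma Kequiv (G : cpoly R m.+1) :
  (forall t, U t -> peval G (tau t) = 0) <->
  (forall s, Lp.[s] != 0 -> peval G (phi s) = 0).
Proof.
split.
- move=> h s Ls.
  have : zariski_closure [set x | exists s : C, (forall j, (Q j).[s] != 0) /\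
      x = (fun j => (P j).[s] / (Q j).[s])] (phi s).
    by move=> p hp; apply: hp; exists s; split => //; exact: LpQ.
  by rewrite -HV => /(_ G); apply => y [t Ut ->]; exact: h.
- move=> h t Ut.
  have : tower_variety delta U (tau t) by move=> p hp; apply: hp; exists t.
  by rewrite HV => /(_ G); apply => y [s [Qs ->]]; apply: h; exact: QLp.
Qed.

Lemma ratc_coord i : uratc R Lp (fun s => phi s i).
Proof.
apply: (@ratc_div R C (@upol R) (@upolM R) (horner Lp) (horner (P i)) (horner (Q i))
   (horner (\prod_(k | k != i) Q k))).
- exact: upolH.
- exact: upolH.
- by move=> s; rewrite /Lp (bigD1 i) //= hornerM.
Qed.

Lemma ratc_phi (G : cpoly R m.+1) : uratc R Lp (fun s => peval G (phi s)).
Proof.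
apply: (@Cl_meval R C (uratc R Lp) (@uratcE R Lp) (@uratcD R Lp) (@uratcM R Lp)
  (@uratcC R Lp) _ G (fun i s => phi s i)).
exact: ratc_coord.
Qed.

Lemma uratc_poly f : uratc R Lp f -> exists pd : {poly C} * nat,
  forall s, Lp.[s] != 0 -> f s * Lp.[s] ^+ pd.2 = pd.1.[s].
Proof. by move=> [g [d [[p hp] hf]]]; exists (p, d) => s Ls; rewrite hf // hp. Qed.


Variables (r : nat) (N D : 'I_r -> cpoly R m.+1).
Hypothesis HD : forall j, exists2 t, U t & peval (D j) (tau t) != 0.
Hypothesis Hr : (0 < r)%N.

Lemma Dphi_nz j : exists2 s, Lp.[s] != 0 & peval (D j) (phi s) != 0.
Proof.
apply: contrapT => hn; have [t Ut Dt] := HD j.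
move/eqP: Dt; apply; apply: (proj2 (Kequiv (D j))) => // s Ls.
by apply/eqP/negPn/negP => nz; apply: hn; exists s.
Qed.

Variables (pD pN : 'I_r -> {poly C} * nat).
Hypothesis hpD : forall j s, Lp.[s] != 0 ->
  peval (D j) (phi s) * Lp.[s] ^+ (pD j).2 = (pD j).1.[s].
Hypothesis hpN : forall j s, Lp.[s] != 0 ->
  peval (N j) (phi s) * Lp.[s] ^+ (pN j).2 = (pN j).1.[s].

Definition P' j := (pN j).1 * Lp ^+ (pD j).2.+1.
Definition Q' j := (pD j).1 * Lp ^+ (pN j).2.+1.

Lemma pD0 j : (pD j).1 != 0.
Proof.
have [s Ls Ds] := Dphi_nz j; apply/negP => /eqP e.
move: Ds; have := hpD j s Ls; rewrite e horner0 => /eqP.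
by rewrite mulf_eq0 expf_eq0 (negPf Ls) andbF orbF => /eqP ->; rewrite eqxx.
Qed.

Lemma Q'0 j : Q' j != 0.
Proof. by rewrite mulf_neq0 ?pD0 ?expf_neq0 ?Lp0. Qed.

Lemma Q'ne s : (forall j, (Q' j).[s] != 0) <->
  (Lp.[s] != 0 /\ forall j, peval (D j) (phi s) != 0).
Proof.
split.
- move=> h.
  have Ls : Lp.[s] != 0.
    have := h (Ordinal Hr); rewrite /Q' hornerM horner_exp mulf_eq0 negb_or.
    by case/andP => _; rewrite expf_eq0 negb_and => /orP[//|->].
  split => // j; have := h j; rewrite /Q' hornerM -(hpD j s Ls).
  by apply: contraNneq => ->; rewrite !mul0r.
- move=> [Ls hD] j; rewrite /Q' hornerM -(hpD j s Ls) horner_exp.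
  by rewrite !mulf_neq0 // expf_neq0.
Qed.

Lemma PQ' s j : Lp.[s] != 0 -> peval (D j) (phi s) != 0 ->
  (P' j).[s] / (Q' j).[s] = peval (N j) (phi s) / peval (D j) (phi s).
Proof.
move=> Ls Ds.
rewrite /P' /Q' !hornerM !horner_exp -(hpN j s Ls) -(hpD j s Ls) !exprS.
field.
by rewrite Ds Ls !expf_neq0.
Qed.

Variable E : cpoly R m.+1.
Hypothesis hE : forall y, peval E y = \prod_j peval (D j) y.

Lemma Ene y : peval E y != 0 <-> forall j, peval (D j) y != 0.
Proof.
rewrite hE; split => [/prodf_neq0 h j|h]; first exact: h.
by apply/prodf_neq0 => j _; apply: h.
Qed.

Local Notation Pol := (Alg.mpol C m.+1).

Lemma fx_G (F : cpoly R r) : exists G' : cpoly R m.+1, forall y,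
  peval G' y = 0 <->
  (peval E y != 0 -> peval F (fun i => peval (N i) y / peval (D i) y) = 0).
Proof.
have PolE := @Alg.mpolE C m.+1.
have PolD := @Alg.mpolD C m.+1.
have PolM := @Alg.mpolM C m.+1.
have PolC := @Alg.mpolC C m.+1.
have PolEE : Pol (peval E) by exact: Alg.mpolP.
have hr : ratc R _ Pol (peval E)
    (fun y => peval F (fun i => peval (N i) y / peval (D i) y)).
  apply: (@Cl_meval R _ (ratc R _ Pol (peval E)) (@ratcE R _ Pol (peval E))
    (@ratcD R _ Pol PolE PolD PolM PolC (peval E) PolEE)
    (@ratcM R _ Pol PolM (peval E)) (@ratcC R _ Pol PolC (peval E)) _ F
    (fun i y => peval (N i) y / peval (D i) y)).
  move=> i; apply: (@ratc_div R _ Pol PolM (peval E) (peval (N i)) (peval (D i))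
    (fun y => \prod_(k < r) (if k != i then peval (D k) y else 1))).
  - exact: Alg.mpolP.
  - apply: (@Cl_prod R _ Pol PolE PolM PolC) => k.
    by case: (k != i); [exact: Alg.mpolP | exact: PolC].
  - by move=> y; rewrite hE (bigD1 i) //= big_mkcond.
have [g [d [[G hG] hg]]] := hr.
have [G' hG'] := PolM _ _ (@Alg.mpolP C m.+1 G) PolEE.
exists G' => y; rewrite /peval -hG' -/(peval G y) -/(peval E y).
have [E0|E0] := eqVneq (peval E y) 0; first by rewrite E0 mulr0; split => // _; rewrite eqxx.
rewrite -[peval G y]/(mpoly.meval y G) -hG -(hg y E0) -mulrA -exprSr /=.
split => [h _|h].
  by move/eqP: h; rewrite mulf_eq0 expf_eq0 (negPf E0) andbF orbF => /eqP.
by have := h isT; rewrite /peval => ->; rewrite mul0r.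
Qed.


Definition Sx := [set x | exists t, [/\ U t, (forall j, peval (D j) (tau t) != 0)
                                      & x = (fun j => rp_fun delta N D j t)]].
Definition Spsi := [set x : 'I_r -> C | exists s, (forall j, (Q' j).[s] != 0) /\
                                   x = (fun j => (P' j).[s] / (Q' j).[s])].

Lemma vanish_equiv (F : cpoly R r) :
  (forall y, Sx y -> peval F y = 0) <-> (forall y, Spsi y -> peval F y = 0).
Proof.
have [G' hG'] := fx_G F.
have eq1 : (forall y, Sx y -> peval F y = 0) <->
    (forall t, U t -> peval G' (tau t) = 0).
  split.
  - move=> h t Ut; apply/hG' => Et; apply: h; exists t; split => //; exact/Ene.
  - move=> h y [t [Ut Dt ->]]; exact: (proj1 (hG' _) (h t Ut) (proj2 (Ene _) Dt)).
have eq3 : (forall s, Lp.[s] != 0 -> peval G' (phi s) = 0) <->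
    (forall y, Spsi y -> peval F y = 0).
  split.
  - move=> h y [s [Qs ->]]; have [Ls Ds] := (Q'ne s).1 Qs.
    have := (hG' (phi s)).1 (h s Ls) ((Ene _).2 Ds).
    rewrite /peval => e; apply: etrans _ e; apply: mpoly.meval_eq => j /=.
    exact: PQ'.
  - move=> h s Ls; apply/hG' => Ep; have Ds := (Ene _).1 Ep.
    have Qs := (Q'ne s).2 (conj Ls Ds).
    have := h _ (ex_intro _ s (conj Qs erefl)).
    rewrite /peval => e; apply: etrans _ e; apply: mpoly.meval_eq => j /=.
    by rewrite PQ'.
apply: iff_trans eq1 _; apply: iff_trans (Kequiv G') eq3.
Qed.

Lemma rad_eq : radical_variety delta U N D = zariski_closure Spsi.
Proof.
rewrite /radical_variety; apply/seteqP; split => x hx F hF; apply: hx.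
  by apply/(vanish_equiv F).
by apply/(vanish_equiv F).
Qed.


Lemma finite_zeros : exists q : {poly C}, q != 0 /\
  forall t, U t -> peval E (tau t) = 0 -> q.[t] = 0.
Proof.
pose a s := phi s ord0.
pose b s := peval E (phi s).
have ra : uratc R Lp a := ratc_coord ord0.
have rb : uratc R Lp b := ratc_phi E.
have [[al' da] ha] := uratc_poly _ ra.
have [[be' db] hb] := uratc_poly _ rb.
pose la := Lp ^+ (da + db).
pose al := al' * Lp ^+ db.
pose be := be' * Lp ^+ da.
have la0 : la != 0 by rewrite expf_neq0 // Lp0.
have [H [H0 hH]] := @elim2 R al be la la0.
have hH' : forall s, Lp.[s] != 0 -> H.[(b s)%:P].[a s] = 0.
  move=> s Ls; have las : la.[s] != 0 by rewrite horner_exp expf_neq0.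
  have -> : b s = be.[s] / la.[s].
    rewrite /be /la hornerM !horner_exp -(hb s Ls) /= exprD; field.
    by rewrite !expf_neq0.
  have -> : a s = al.[s] / la.[s].
    rewrite /al /la hornerM !horner_exp -(ha s Ls) /= exprD; field.
    by rewrite !expf_neq0.
  exact: hH.
have [H1 [k [eH qn0]]] := @peel R H H0.
have [s0 [Ls0 bs0]] : exists s0, Lp.[s0] != 0 /\ b s0 != 0.
  have Z0 : Lp * \prod_j (pD j).1 != 0.
    by rewrite mulf_neq0 ?Lp0 //; apply/prodf_neq0 => j _; exact: pD0.
  have [s0 hs0] := @poly_nonroot R _ Z0.
  move: hs0; rewrite hornerM mulf_eq0 negb_or => /andP[Ls0 hp0].
  move: hp0; rewrite horner_prod => /prodf_neq0 hp.
  exists s0; split; first exact: Ls0.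
  rewrite /b /= hE; apply/prodf_neq0 => j _.
  by have := hp j isT; rewrite -(hpD j s0 Ls0) mulf_eq0 negb_or => /andP[].
have be'0 : be' != 0.
  apply/negP => /eqP e; move: bs0; have := hb s0 Ls0; rewrite e horner0 => /eqP.
  by rewrite mulf_eq0 expf_eq0 (negPf Ls0) andbF orbF => /eqP ->; rewrite eqxx.
have hH1 : forall s, Lp.[s] != 0 -> H1.[(b s)%:P].[a s] = 0.
  apply: (@uratc_zero R Lp be' (fun s => H1.[(b s)%:P].[a s]) Lp0 be'0).
    exact: (@Cl_eval2 R C (uratc R Lp) (@uratcE R Lp) (@uratcD R Lp) (@uratcM R Lp)
      (@uratcC R Lp) H1 a b ra rb).
  move=> s Ls bes.
  have bs : b s != 0.
    by apply: contraNneq bes => bz; rewrite -(hb s Ls) /= bz mul0r.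
  have := hH' s Ls; rewrite eH hornerM hornerXn -rmorphXn /= hornerM hornerC.
  by move/eqP; rewrite mulf_eq0 expf_eq0 (negPf bs) andbF orbF => /eqP.
have [G2 hG2] : Alg.mpol C m.+1 (fun y => H1.[(peval E y)%:P].[y ord0]).
  apply: (@Cl_eval2 R _ (Alg.mpol C m.+1) (@Alg.mpolE C m.+1) (@Alg.mpolD C m.+1)
    (@Alg.mpolM C m.+1) (@Alg.mpolC C m.+1) H1 (fun y => y ord0) (peval E)).
    exact: Alg.mpolX.
  exact: Alg.mpolP.
have hz : forall t, U t -> peval G2 (tau t) = 0.
  by apply/(Kequiv G2) => s Ls; rewrite /peval -hG2; exact: hH1 s Ls.
exists H1`_0; split => // t Ut Et.
have := hz t Ut; rewrite /peval -hG2 -/(peval E (tau t)) Et polyC0 horner_coef0.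
by have -> : tau t ord0 = t by rewrite /tower_pt unlift_none.
Qed.

Hypothesis HU : open (U : set C^o).
Hypothesis Hder : exists j t, [/\ U t, peval (D j) (tau t) != 0 &
  'D_1 (rp_fun delta N D j : C^o -> C^o) t != 0].

Lemma nonconst : exists j, forall c : C, P' j != c *: Q' j.
Proof.
apply: contrapT => hn.
have hc : forall j, exists c : C, P' j = c *: Q' j.
  move=> j; apply: contrapT => hj; apply: hn; exists j => c; apply/eqP => e.
  by apply: hj; exists c.
have [j0 [t0 [Ut0 Dt0 Hd]]] := Hder.
have [c ec] := hc j0.
have [G hG] := @Alg.mevalXsubC C r j0 c.
have vF : forall y, Spsi y -> peval G y = 0.
  move=> y [s [Qs ->]]; rewrite /peval hG /= ec hornerZ mulfK ?subrr //.
have vx := (proj2 (vanish_equiv G)) vF.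
have hxc : forall t, U t -> peval E (tau t) != 0 -> rp_fun delta N D j0 t = c.
  move=> t Ut Et; have := vx _ (ex_intro _ t (And3 Ut ((Ene _).1 Et) erefl)).
  by rewrite /peval hG => /eqP; rewrite subr_eq0 => /eqP.
have [q [q0 hq]] := finite_zeros.
have [e1 [e10 he1]] := @nonroot_ball R q t0 q0.
have : nbhs (t0 : C^o) U by exact: open_nbhs_nbhs.
move/nbhs_ballP => [e2 e20 he2].
have key : forall e, 0 < e -> e <= e1 -> e <= e2 -> False.
  move=> e e0 ee1 ee2; move/negP: Hd; apply.
  rewrite (@deriv_zero R _ t0 c) ?eqxx //.
  apply: (@ball_near R _ e e0) => h h0 he.
  have Uh : U (h + t0).
    apply: he2; rewrite -ball_normE /= opprD addrCA subrr addr0 normrN.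
    exact: lt_le_trans he ee2.
  apply: hxc => //; apply/negP => /eqP Ez.
  have := hq _ Uh Ez; apply/eqP; apply: he1 => //.
  exact: lt_le_trans he ee1.
have [ab|ba] := orP (real_leVge (gtr0_real e10) (gtr0_real e20)).
  exact: (key e1).
exact: (key e2).
Qed.

End Main.

Theorem theorem4p9 (R : realType) (m : nat) (e : 'I_m -> nat) (U : set R[i])
    (delta : 'I_m -> R[i] -> R[i]) (A B : forall i : 'I_m, cpoly R i.+1) :
  radical_tower delta e U A B ->
  rational_curve (tower_variety delta U) ->
  forall (r : nat) (N D : 'I_r -> cpoly R m.+1),
    radical_parametrization delta U N D ->
    rational_curve (radical_variety delta U N D).
Proof.
move=> [[HU _] _ _ _ _] [P [Q [HQ [_ HV]]]] r N D [Hr1 HD Hder].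
have Hr : (0 < r)%N by apply: ltn_trans Hr1.
have [pD hpD] := boolp.choice (fun j => @uratc_poly R m Q _ (@ratc_phi R m P Q (D j))).
have [pN hpN] := boolp.choice (fun j => @uratc_poly R m Q _ (@ratc_phi R m P Q (N j))).
have [E hE] : Alg.mpol R[i] m.+1 (fun y => \prod_j peval (D j) y).
  apply: (@Cl_prod R _ (Alg.mpol R[i] m.+1) (@Alg.mpolE _ _) (@Alg.mpolM _ _)
    (@Alg.mpolC _ _)) => j.
  exact: Alg.mpolP.
have hE' : forall y, peval E y = \prod_j peval (D j) y by move=> y; rewrite hE.
exists (@P' R m Q r pD pN), (@Q' R m Q r pD pN); split.
  exact: (@Q'0 R m delta U P Q HQ HV r D HD pD pN hpD).
split.
  exact: (@nonconst R m delta U P Q HQ HV r N D HD Hr pD pN hpD hpN E hE' HU Hder).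
exact: (@rad_eq R m delta U P Q HV r N D Hr pD pN hpD hpN E hE').
Qed.
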